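(* Let $a\ge 2$ be an integer. For $i\ge 0$, let $S^{(a)}_i=\{a^{2i},a^{2i}+1,\ldots,a^{2i+1}\}$, and let $S^{(a)}=\bigcup_{i\ge0}S^{(a)}_i$. For each $i$, let $\sigma^a_i$ be a permutation of $S^{(a)}_i$ containing no 3-term arithmetic progression as a subsequence. Then: (a) the concatenation $\sigma^a_0\sigma^a_1\sigma^a_2\cdots$ contains no 4-term arithmetic progression as a subsequence, so $S^{(a)}$ is 4-free; (b) $\overline{d}(S^{(a)})=a/(a+1)$ and $\underline{d}(S^{(a)})=1/(a+1)$.
   Context: A sequence contains a $k$-term arithmetic progression as a subsequence if there are positions $i_1<\cdots<i_k$ whose entries satisfy $a_{i_{m+1}}-a_{i_m}=d$ for all $m$, for some fixed $d\neq0$ (positive or negative). A set $S$ of positive integers is $n$-free if its elements can be listed in a sequence, each element appearing exactly once, that contains no $n$-term arithmetic progression as a subsequence. For $S\subseteq\mathbb{Z}_{>0}$ with $A(n)=|S\cap[1,n]|$, the upper density is $\overline{d}(S)=\limsup_{n\to\infty} A(n)/n$ and the lower density is $\underline{d}(S)=\liminf_{n\to\infty} A(n)/n$. Every finite set of consecutive integers admits a permutation with no 3-term arithmetic progression as a subsequence. *)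

(* Defs.v *)
From Stdlib Require Import Reals Lia ZArith Arith List Permutation Classical ClassicalDescription.
Import ListNotations.
Open Scope R_scope.

Definition is_AP_sub (k : nat) (val : nat -> nat) (idx : nat -> nat) : Prop :=
  (forall m, (m + 1 < k)%nat -> (idx m < idx (m + 1))%nat) /\
  exists d : Z, d <> 0%Z /\
    forall m, (m + 1 < k)%nat ->
      (Z.of_nat (val (idx (m + 1)%nat)) - Z.of_nat (val (idx m)))%Z = d.

Definition list_has_AP (k : nat) (l : list nat) : Prop :=
  exists idx, is_AP_sub k (fun j => nth j l 0%nat) idx /\
              (forall m, (m < k)%nat -> (idx m < length l)%nat).

Definition stream_has_AP (k : nat) (f : nat -> nat) : Prop :=
  exists idx, is_AP_sub k f idx.

Definition n_free (n : nat) (T : nat -> Prop) : Prop :=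
  (forall x, T x -> (0 < x)%nat) /\
  ((exists l : list nat, NoDup l /\ (forall x, In x l <-> T x) /\ ~ list_has_AP n l)
   \/
   (exists f : nat -> nat, (forall i j, f i = f j -> i = j) /\
      (forall x, T x <-> exists i, f i = x) /\ ~ stream_has_AP n f)).

Definition Sa_block (a i : nat) : list nat :=
  seq (a ^ (2 * i)) (a ^ (2 * i + 1) - a ^ (2 * i) + 1).

Definition In_Sa (a x : nat) : Prop :=
  exists i : nat, (a ^ (2 * i) <= x <= a ^ (2 * i + 1))%nat.

(* The infinite concatenation sigma_0 sigma_1 sigma_2 ... : the n-th entry is the
   n-th entry of the concatenation of the first n+1 blocks (each block is
   nonempty, so this is well defined and is the n-th entry of the full
   concatenation). *)
Definition concat_stream (sigma : nat -> list nat) (n : nat) : nat :=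
  nth n (concat (map sigma (seq 0 (n + 1)))) 0%nat.

Definition countA (T : nat -> Prop) (n : nat) : nat :=
  length (filter (fun x => if excluded_middle_informative (T x) then true else false)
                 (seq 1 n)).

Definition density_ratio (T : nat -> Prop) (n : nat) : R :=
  INR (countA T n) / INR n.

Definition is_limsup (u : nat -> R) (L : R) : Prop :=
  (forall eps, eps > 0 -> exists N, forall n, (n >= N)%nat -> u n < L + eps) /\
  (forall eps, eps > 0 -> forall N, exists n, (n >= N)%nat /\ u n > L - eps).

Definition is_liminf (u : nat -> R) (L : R) : Prop :=
  (forall eps, eps > 0 -> exists N, forall n, (n >= N)%nat -> u n > L - eps) /\
  (forall eps, eps > 0 -> forall N, exists n, (n >= N)%nat /\ u n < L + eps).

(* Main.v *)
Require Import Defs.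
From Stdlib Require Import Reals Lia Lra ZArith Arith List Permutation Classical ClassicalDescription.
Import ListNotations.
Open Scope nat_scope.

Lemma pow_pos1 (a k : nat) : 2 <= a -> 1 <= a ^ k.
Proof. intro. change 1 with (a ^ 0). apply Nat.pow_le_mono_r; lia. Qed.

Lemma pow_S_eq (a k : nat) : a ^ (k + 1) = a * a ^ k.
Proof. rewrite Nat.add_1_r. apply Nat.pow_succ_r'. Qed.

Definition Pf (sigma : nat -> list nat) (b : nat) : nat :=
  length (concat (map sigma (seq 0 b))).

Lemma Pf_S sigma b : Pf sigma (S b) = Pf sigma b + length (sigma b).
Proof.
  unfold Pf. rewrite seq_S, map_app, concat_app, length_app. simpl.
  rewrite app_nil_r. reflexivity.
Qed.

Lemma len_sigma a sigma (ha : 2 <= a)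
  (hperm : forall i, Permutation (sigma i) (Sa_block a i)) i :
  length (sigma i) = a ^ (2 * i + 1) - a ^ (2 * i) + 1.
Proof. rewrite (Permutation_length (hperm i)). unfold Sa_block. apply length_seq. Qed.

Lemma in_sigma a sigma (ha : 2 <= a)
  (hperm : forall i, Permutation (sigma i) (Sa_block a i)) b x :
  In x (sigma b) -> a ^ (2 * b) <= x <= a ^ (2 * b + 1).
Proof.
  intro H. apply (Permutation_in _ (hperm b)) in H. unfold Sa_block in H.
  apply in_seq in H.
  assert (a ^ (2*b+1) = a * a ^ (2*b)) by apply pow_S_eq.
  assert (1 <= a ^ (2*b)) by (apply pow_pos1; lia).
  nia.
Qed.

Lemma Pf_mono a sigma (ha : 2 <= a)
  (hperm : forall i, Permutation (sigma i) (Sa_block a i)) b b' :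
  b <= b' -> Pf sigma b + (b' - b) <= Pf sigma b'.
Proof.
  induction 1. rewrite Nat.sub_diag; lia.
  rewrite Pf_S, (len_sigma a sigma ha hperm). lia.
Qed.

Lemma block_exists a sigma (ha : 2 <= a)
  (hperm : forall i, Permutation (sigma i) (Sa_block a i)) n :
  exists b, Pf sigma b <= n < Pf sigma (S b).
Proof.
  induction n.
  - exists 0. rewrite Pf_S, (len_sigma a sigma ha hperm). unfold Pf. simpl. lia.
  - destruct IHn as [b Hb].
    destruct (Nat.eq_dec (S n) (Pf sigma (S b))) as [E|E].
    + exists (S b). rewrite (Pf_S _ (S b)), (len_sigma a sigma ha hperm). lia.
    + exists b. lia.
Qed.

Lemma stream_val a sigma (ha : 2 <= a)
  (hperm : forall i, Permutation (sigma i) (Sa_block a i)) b n :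
  Pf sigma b <= n < Pf sigma (S b) ->
  concat_stream sigma n = nth (n - Pf sigma b) (sigma b) 0.
Proof.
  intros [H1 H2]. unfold concat_stream.
  pose proof (Pf_mono a sigma ha hperm 0 b ltac:(lia)).
  replace (n + 1) with (b + S (n - b)) by lia.
  rewrite seq_app, map_app, concat_app. simpl.
  rewrite app_nth2 by (unfold Pf in *; lia).
  fold (Pf sigma b).
  rewrite app_nth1. reflexivity.
  rewrite Pf_S in H2. lia.
Qed.

Lemma block_mono a sigma (ha : 2 <= a)
  (hperm : forall i, Permutation (sigma i) (Sa_block a i)) b b' n n' :
  Pf sigma b <= n < Pf sigma (S b) -> Pf sigma b' <= n' < Pf sigma (S b') ->
  n <= n' -> b <= b'.
Proof.
  intros H H' Hn. destruct (Nat.le_gt_cases b b') as [|Hc]; auto.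
  pose proof (Pf_mono a sigma ha hperm (S b') b ltac:(lia)). lia.
Qed.

Lemma jump a sigma (ha : 2 <= a)
  (hperm : forall i, Permutation (sigma i) (Sa_block a i)) b b' x y :
  b < b' -> In x (sigma b) -> In y (sigma b') -> 2 * x <= y.
Proof.
  intros Hb Hx Hy.
  apply (in_sigma a sigma ha hperm) in Hx. apply (in_sigma a sigma ha hperm) in Hy.
  assert (a ^ (2*b+1+1) <= a ^ (2*b')) by (apply Nat.pow_le_mono_r; lia).
  rewrite pow_S_eq in H. nia.
Qed.

Lemma stream_in a sigma (ha : 2 <= a)
  (hperm : forall i, Permutation (sigma i) (Sa_block a i)) b n :
  Pf sigma b <= n < Pf sigma (S b) -> In (concat_stream sigma n) (sigma b).
Proof.
  intro H. rewrite (stream_val a sigma ha hperm b n H). apply nth_In.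
  rewrite Pf_S in H. lia.
Qed.

Lemma three_same a sigma (ha : 2 <= a)
  (hperm : forall i, Permutation (sigma i) (Sa_block a i))
  (hno3 : forall i, ~ list_has_AP 3 (sigma i)) b i0 i1 i2 (d : Z) :
  Pf sigma b <= i0 -> i0 < i1 -> i1 < i2 -> i2 < Pf sigma (S b) -> d <> 0%Z ->
  (Z.of_nat (concat_stream sigma i1) - Z.of_nat (concat_stream sigma i0))%Z = d ->
  (Z.of_nat (concat_stream sigma i2) - Z.of_nat (concat_stream sigma i1))%Z = d ->
  False.
Proof.
  intros H0 H01 H12 H2 Hd E1 E2.
  rewrite (stream_val a sigma ha hperm b i0) in E1 by lia.
  rewrite (stream_val a sigma ha hperm b i1) in E1, E2 by lia.
  rewrite (stream_val a sigma ha hperm b i2) in E2 by lia.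
  rewrite Pf_S in H2.
  apply (hno3 b). exists (fun j => match j with 0 => i0 - Pf sigma b | 1 => i1 - Pf sigma b | _ => i2 - Pf sigma b end).
  split. split.
  - intros m Hm. destruct m as [|[|m]]; simpl; lia.
  - exists d. split; auto. intros m Hm. destruct m as [|[|m]]; simpl. exact E1. exact E2. lia.
  - intros m Hm. destruct m as [|[|m]]; simpl; lia.
Qed.

Lemma partA a sigma (ha : 2 <= a)
  (hperm : forall i, Permutation (sigma i) (Sa_block a i))
  (hno3 : forall i, ~ list_has_AP 3 (sigma i)) :
  ~ stream_has_AP 4 (concat_stream sigma).
Proof.
  intros [idx [Hinc [d [Hd Hdiff]]]].
  pose proof (Hinc 0 ltac:(lia)) as I0. pose proof (Hinc 1 ltac:(lia)) as I1.
  pose proof (Hinc 2 ltac:(lia)) as I2. simpl in I0, I1, I2.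
  pose proof (Hdiff 0 ltac:(lia)) as D0. pose proof (Hdiff 1 ltac:(lia)) as D1.
  pose proof (Hdiff 2 ltac:(lia)) as D2. simpl in D0, D1, D2.
  destruct (block_exists a sigma ha hperm (idx 0)) as [b0 B0].
  destruct (block_exists a sigma ha hperm (idx 1)) as [b1 B1].
  destruct (block_exists a sigma ha hperm (idx 2)) as [b2 B2].
  destruct (block_exists a sigma ha hperm (idx 3)) as [b3 B3].
  pose proof (block_mono a sigma ha hperm _ _ _ _ B0 B1 ltac:(lia)).
  pose proof (block_mono a sigma ha hperm _ _ _ _ B1 B2 ltac:(lia)).
  pose proof (block_mono a sigma ha hperm _ _ _ _ B2 B3 ltac:(lia)).
  pose proof (stream_in a sigma ha hperm _ _ B0) as V0.
  pose proof (stream_in a sigma ha hperm _ _ B1) as V1.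
  pose proof (stream_in a sigma ha hperm _ _ B2) as V2.
  pose proof (stream_in a sigma ha hperm _ _ B3) as V3.
  pose proof (in_sigma a sigma ha hperm _ _ V0).
  pose proof (in_sigma a sigma ha hperm _ _ V1).
  pose proof (pow_pos1 a (2*b0) ha). pose proof (pow_pos1 a (2*b1) ha).
  assert (b1 = b2).
  { destruct (Nat.eq_dec b1 b2); auto.
    pose proof (jump a sigma ha hperm b1 b2 _ _ ltac:(lia) V1 V2). lia. }
  assert (b2 = b3).
  { destruct (Nat.eq_dec b2 b3); auto.
    pose proof (jump a sigma ha hperm b2 b3 _ _ ltac:(lia) V2 V3). lia. }
  subst b2 b3.
  apply (three_same a sigma ha hperm hno3 b1 (idx 1) (idx 2) (idx 3) d); lia.
Qed.

Lemma partA2 a sigma (ha : 2 <= a)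
  (hperm : forall i, Permutation (sigma i) (Sa_block a i))
  (hno3 : forall i, ~ list_has_AP 3 (sigma i)) :
  n_free 4 (In_Sa a).
Proof.
  split.
  { intros x [i Hi]. pose proof (pow_pos1 a (2*i) ha). lia. }
  right. exists (concat_stream sigma). split; [|split].
  - intros i j E.
    destruct (block_exists a sigma ha hperm i) as [b Bi].
    destruct (block_exists a sigma ha hperm j) as [b' Bj].
    pose proof (stream_in a sigma ha hperm _ _ Bi) as Vi.
    pose proof (stream_in a sigma ha hperm _ _ Bj) as Vj.
    pose proof (in_sigma a sigma ha hperm _ _ Vi).
    pose proof (in_sigma a sigma ha hperm _ _ Vj).
    pose proof (pow_pos1 a (2*b) ha). pose proof (pow_pos1 a (2*b') ha).
    destruct (Nat.lt_total b b') as [Hl|[He|Hl]].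
    + pose proof (jump a sigma ha hperm _ _ _ _ Hl Vi Vj). lia.
    + subst b'. rewrite (stream_val a sigma ha hperm b i Bi), (stream_val a sigma ha hperm b j Bj) in E.
      assert (ND : NoDup (sigma b)).
      { apply (Permutation_NoDup (Permutation_sym (hperm b))). apply seq_NoDup. }
      rewrite (NoDup_nth _ 0) in ND. rewrite Pf_S in Bi, Bj.
      pose proof (ND (i - Pf sigma b) (j - Pf sigma b) ltac:(lia) ltac:(lia) E). lia.
    + pose proof (jump a sigma ha hperm _ _ _ _ Hl Vj Vi). lia.
  - intros x. split.
    + intros [k Hk].
      assert (In x (sigma k)).
      { apply (Permutation_in _ (Permutation_sym (hperm k))). unfold Sa_block.
        apply in_seq. lia. }
      destruct (@In_nth nat _ _ 0 H) as [o [Ho Eo]].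
      exists (Pf sigma k + o).
      rewrite (stream_val a sigma ha hperm k) by (rewrite Pf_S; lia).
      rewrite Nat.add_comm, Nat.add_sub. exact Eo.
    + intros [i Ei]. subst x.
      destruct (block_exists a sigma ha hperm i) as [b Bi].
      unfold In_Sa. exists b. apply (in_sigma a sigma ha hperm b). apply (stream_in a sigma ha hperm _ _ Bi).
  - exact (partA a sigma ha hperm hno3).
Qed.

Lemma countA_S T n : countA T (S n) =
  countA T n + (if excluded_middle_informative (T (S n)) then 1 else 0).
Proof.
  unfold countA. rewrite seq_S, filter_app, length_app. simpl.
  destruct (excluded_middle_informative (T (S n))); simpl; lia.
Qed.

Lemma notin_gap a (ha : 2 <= a) k x :
  a ^ (2*k+1) < x < a ^ (2*k+2) -> ~ In_Sa a x.
Proof.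
  intros H [i Hi].
  destruct (Nat.le_gt_cases i k).
  - assert (a ^ (2*i+1) <= a ^ (2*k+1)) by (apply Nat.pow_le_mono_r; lia). lia.
  - assert (a ^ (2*k+2) <= a ^ (2*i)) by (apply Nat.pow_le_mono_r; lia). lia.
Qed.

Definition Inv a n := 
  (n = 0 /\ countA (In_Sa a) n = 0) \/
  (exists k, a^(2*k) <= n <= a^(2*k+1) /\
     (a+1) * countA (In_Sa a) n + a^(2*k+1) + 1 = (a+1)*n + (a+1)*(k+1)) \/
  (exists k, a^(2*k+1) < n < a^(2*k+2) /\
     (a+1) * countA (In_Sa a) n + 1 = a^(2*k+2) + (a+1)*(k+1)).

Lemma inv_all a (ha : 2 <= a) n : Inv a n.
Proof.
  induction n.
  - left. split; auto.
  - unfold Inv in *. rewrite countA_S.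
    destruct (excluded_middle_informative (In_Sa a (S n))) as [Hin|Hin].
    + destruct IHn as [[H0 HC]|[[k [Hk E]]|[k [Hk E]]]].
      * subst n. right; left. exists 0. rewrite HC. simpl. lia.
      * destruct (Nat.eq_dec n (a^(2*k+1))) as [Hq|Hq].
        { exfalso. apply (notin_gap a ha k (S n)); [|exact Hin].
          replace (2*k+2) with ((2*k+1)+1) by lia. rewrite (pow_S_eq a (2*k+1)).
          pose proof (pow_pos1 a (2*k) ha). rewrite (pow_S_eq a (2*k)) in *. nia. }
        right; left. exists k. split. lia. nia.
      * destruct (Nat.eq_dec (S n) (a^(2*k+2))) as [Hr|Hr].
        { right; left. exists (S k). replace (2 * S k) with (2*k+2) by lia.
          replace (2*k+2+1) with ((2*k+2)+1) by lia. rewrite (pow_S_eq a (2*k+2)).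
          split. split. lia. pose proof (pow_pos1 a (2*k+2) ha). nia.
          rewrite <- Hr. nia. }
        { exfalso. apply (notin_gap a ha k (S n)); [lia|exact Hin]. }
    + destruct IHn as [[H0 HC]|[[k [Hk E]]|[k [Hk E]]]].
      * subst n. exfalso. apply Hin. exists 0. simpl. lia.
      * destruct (Nat.eq_dec n (a^(2*k+1))) as [Hq|Hq].
        { right; right. exists k. split.
          - split. lia.
            replace (2*k+2) with ((2*k+1)+1) by lia. rewrite pow_S_eq.
            pose proof (pow_pos1 a (2*k) ha). rewrite pow_S_eq with (k:=2*k) in *. nia.
          - replace (2*k+2) with ((2*k+1)+1) by lia. rewrite pow_S_eq. nia. }
        { exfalso. apply Hin. exists k. lia. }
      * destruct (Nat.eq_dec (S n) (a^(2*k+2))) as [Hr|Hr].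
        { exfalso. apply Hin. exists (S k). replace (2 * S k) with (2*k+2) by lia.
          replace (2*k+2+1) with ((2*k+2)+1) by lia. rewrite (pow_S_eq a (2*k+2)).
          pose proof (pow_pos1 a (2*k+2) ha). nia. }
        { right; right. exists k. split. lia. lia. }
Qed.

Lemma two_pow k : k + 1 <= 2 ^ k.
Proof. induction k. simpl; lia. rewrite Nat.pow_succ_r'. lia. Qed.

Lemma sq_le_pow a (ha : 2 <= a) k : (k+1)*(k+1) <= a ^ (2*k).
Proof.
  pose proof (two_pow k).
  assert (2 ^ (2*k) <= a ^ (2*k)) by (apply Nat.pow_le_mono_l; lia).
  replace (2*k) with (k+k) in * by lia. rewrite Nat.pow_add_r in H0. pose proof (Nat.mul_le_mono _ _ _ _ H H). lia.
Qed.

Lemma boundL a (ha : 2 <= a) n : n <= (a+1) * countA (In_Sa a) n.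
Proof.
  destruct (inv_all a ha n) as [[H0 HC]|[[k [Hk E]]|[k [Hk E]]]].
  - lia.
  - rewrite (pow_S_eq a (2*k)) in *. nia.
  - replace (2*k+2) with ((2*k+1)+1) in * by lia. rewrite (pow_S_eq a (2*k+1)) in *. nia.
Qed.

Lemma boundU a (ha : 2 <= a) n M : M * M <= n ->
  (a+1) * countA (In_Sa a) n * M <= a * n * M + (a+1) * n.
Proof.
  intro HM.
  assert (forall k, a^(2*k) <= n -> (k+1) * M <= n).
  { intros k Hk. pose proof (sq_le_pow a ha k).
    destruct (Nat.le_gt_cases (k+1) M); nia. }
  destruct (inv_all a ha n) as [[H0 HC]|[[k [Hk E]]|[k [Hk E]]]].
  - subst n. rewrite HC. lia.
  - pose proof (H k ltac:(lia)).
    assert ((a+1) * countA (In_Sa a) n <= a * n + (a+1)*(k+1)) by nia. nia.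
  - assert (a^(2*k) <= a^(2*k+1)) by (apply Nat.pow_le_mono_r; lia).
    pose proof (H k ltac:(lia)).
    replace (2*k+2) with ((2*k+1)+1) in * by lia. rewrite (pow_S_eq a (2*k+1)) in *.
    assert ((a+1) * countA (In_Sa a) n <= a * n + (a+1)*(k+1)) by nia. nia.
Qed.

Lemma boundS1 a (ha : 2 <= a) j :
  a * a^(2*j+1) <= (a+1) * countA (In_Sa a) (a^(2*j+1)).
Proof.
  destruct (inv_all a ha (a^(2*j+1))) as [[H0 HC]|[[k [Hk E]]|[k [Hk E]]]].
  - pose proof (pow_pos1 a (2*j+1) ha). lia.
  - assert (2*k <= 2*j+1) by (apply (Nat.pow_le_mono_r_iff a); lia).
    assert (2*j+1 <= 2*k+1) by (apply (Nat.pow_le_mono_r_iff a); lia).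
    assert (k = j) by lia. subst k. nia.
  - assert (2*k+1 < 2*j+1) by (apply (Nat.pow_lt_mono_r_iff a); lia).
    assert (2*j+1 < 2*k+2) by (apply (Nat.pow_lt_mono_r_iff a); lia). lia.
Qed.

Lemma boundS2 a (ha : 2 <= a) j : 1 <= j ->
  (a+1) * countA (In_Sa a) (a^(2*j) - 1) <= (a^(2*j) - 1) + (a+1) * j.
Proof.
  intro Hj.
  assert (a^2 <= a^(2*j)) by (apply Nat.pow_le_mono_r; lia).
  assert (4 <= a^2) by (simpl; nia).
  destruct (inv_all a ha (a^(2*j) - 1)) as [[Hz HC]|[[k [Hk E]]|[k [Hk E]]]].
  - lia.
  - assert (2*k < 2*j) by (apply (Nat.pow_lt_mono_r_iff a); lia).
    assert (a^(2*k+2) <= a^(2*j)) by (apply Nat.pow_le_mono_r; lia).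
    replace (2*k+2) with ((2*k+1)+1) in * by lia. rewrite (pow_S_eq a (2*k+1)) in *.
    nia.
  - assert (2*j <= 2*k+2) by (apply (Nat.pow_le_mono_r_iff a); lia).
    assert (2*k+1 < 2*j) by (apply (Nat.pow_lt_mono_r_iff a); lia).
    assert (j = k+1) by lia. subst j. replace (2*(k+1)) with (2*k+2) in * by lia. lia.
Qed.
Open Scope R_scope.

Lemma realG (c n b a M : nat) : (0 < n)%nat -> (0 < M)%nat ->
  ((a+1)*c*M <= b*n*M + (a+1)*n)%nat ->
  INR c / INR n <= INR b / (INR a + 1) + / INR M.
Proof.
  intros Hn HM H. apply le_INR in H. rewrite !plus_INR, !mult_INR, plus_INR in H.
  replace (INR 1) with 1 in H by reflexivity.
  apply lt_0_INR in Hn. apply lt_0_INR in HM. pose proof (pos_INR a).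
  set (C := INR c) in *. set (Nn := INR n) in *. set (B := INR b) in *.
  set (A := INR a) in *. set (Mm := INR M) in *.
  assert (E: B/(A+1) + /Mm - C/Nn = (B*Nn*Mm + (A+1)*Nn - (A+1)*C*Mm) * / ((A+1)*Nn*Mm))
    by (field; repeat split; lra).
  assert (0 <= (B*Nn*Mm + (A+1)*Nn - (A+1)*C*Mm) * / ((A+1)*Nn*Mm)).
  { apply Rmult_le_pos. lra. left. apply Rinv_0_lt_compat.
    apply Rmult_lt_0_compat. apply Rmult_lt_0_compat; lra. lra. }
  lra.
Qed.

Lemma realH (c n b a : nat) : (0 < n)%nat ->
  (b*n <= (a+1)*c)%nat ->
  INR b / (INR a + 1) <= INR c / INR n.
Proof.
  intros Hn H. apply le_INR in H. rewrite !mult_INR, plus_INR in H.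
  replace (INR 1) with 1 in H by reflexivity.
  apply lt_0_INR in Hn. pose proof (pos_INR a).
  set (C := INR c) in *. set (Nn := INR n) in *. set (B := INR b) in *.
  set (A := INR a) in *.
  assert (E: C/Nn - B/(A+1) = ((A+1)*C - B*Nn) * / ((A+1)*Nn))
    by (field; repeat split; lra).
  assert (0 <= ((A+1)*C - B*Nn) * / ((A+1)*Nn)).
  { apply Rmult_le_pos. lra. left. apply Rinv_0_lt_compat.
    apply Rmult_lt_0_compat; lra. }
  lra.
Qed.

Theorem mainTheorem8 (a : nat) (ha : (2 <= a)%nat) (sigma : nat -> list nat)
  (hperm : forall i, Permutation (sigma i) (Sa_block a i))
  (hno3 : forall i, ~ list_has_AP 3 (sigma i)) :
  (~ stream_has_AP 4 (concat_stream sigma) /\ n_free 4 (In_Sa a)) /\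
  is_limsup (density_ratio (In_Sa a)) (INR a / (INR a + 1)) /\
  is_liminf (density_ratio (In_Sa a)) (1 / (INR a + 1)).
Proof.
  split; [split|split].
  - exact (partA a sigma ha hperm hno3).
  - exact (partA2 a sigma ha hperm hno3).
  - split.
    + intros eps Heps. destruct (archimed_cor1 eps Heps) as [M [HM HM0]].
      exists (Nat.max 1 (M*M)). intros n Hn. unfold density_ratio.
      pose proof (realG (countA (In_Sa a) n) n a a M ltac:(lia) HM0
        (boundU a ha n M ltac:(lia))). lra.
    + intros eps Heps N. exists (a^(2*N+1))%nat. split.
      * pose proof (two_pow (2*N+1)).
        assert (2^(2*N+1) <= a^(2*N+1))%nat by (apply Nat.pow_le_mono_l; lia). lia.
      * unfold density_ratio.
        pose proof (realH (countA (In_Sa a) (a^(2*N+1))) (a^(2*N+1)) a a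
          ltac:(pose proof (pow_pos1 a (2*N+1) ha); lia) (boundS1 a ha N)). lra.
  - split.
    + intros eps Heps. exists 1%nat. intros n Hn. unfold density_ratio.
      pose proof (realH (countA (In_Sa a) n) n 1 a ltac:(lia)
        ltac:(pose proof (boundL a ha n); lia)).
      replace (INR 1) with 1 in H by reflexivity. lra.
    + intros eps Heps N. destruct (archimed_cor1 eps Heps) as [M [HM HM0]].
      set (j := (M + N + 1)%nat).
      pose proof (sq_le_pow a ha j).
      exists (a^(2*j) - 1)%nat. split. nia.
      unfold density_ratio.
      pose proof (boundS2 a ha j ltac:(lia)).
      pose proof (realG (countA (In_Sa a) (a^(2*j) - 1)) (a^(2*j) - 1) 1 a M
        ltac:(nia) HM0 ltac:(nia)).
      replace (INR 1) with 1 in H1 by reflexivity. lra.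
Qed.
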